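(* Fix $M>0$ and let $\mathcal{A}$ be the class of functions $m\in W^{1,2}(0,1)$ with $\int_0^1e^{m}\,dx=M$. Then for every sufficiently small $\delta>0$ and every continuous function $h_\delta:[0,\infty)\to\mathbb{R}$, the inequality $$\int_0^1e^{2m}\,dx<\delta M^2\int_0^1|m_x|^2\,dx+h_\delta\Big(\int_0^1e^m\,dx\Big)$$ does not hold for all $m\in\mathcal{A}$. *)

(* Defs.v *)
From HB Require Import structures.
From mathcomp Require Import all_boot all_order all_algebra.
From mathcomp Require Import all_classical all_reals all_analysis.
Set Implicit Arguments. Unset Strict Implicit. Unset Printing Implicit Defensive.
Import Order.TTheory GRing.Theory Num.Theory.
Import numFieldNormedType.Exports.
Local Open Scope classical_set_scope.
Local Open Scope ring_scope.

Definition I01 {R : realType} : set R := `]0, 1[%classic.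

Definition test_fun {R : realType} (phi : R -> R) : Prop :=
  (forall (n : nat) (x : R), derivable (iter n (@derive1 R R^o) phi) x 1) /\
  exists a b : R, [/\ 0 < a, a < b, b < 1 &
    forall x, x < a \/ b < x -> phi x = 0].

Definition L2_01 {R : realType} (u : R -> R) : Prop :=
  measurable_fun I01 u /\
  (\int[lebesgue_measure]_(x in I01) ((u x) ^+ 2)%:E < +oo)%E.

(* m belongs to W^{1,2}(0,1) and g is (a representative of) its weak
   derivative m_x:  m, g in L^2(0,1) and
   int_0^1 m phi' = - int_0^1 g phi  for every test function phi. *)
Definition W12_weak_deriv {R : realType} (m g : R -> R) : Prop :=
  [/\ L2_01 m, L2_01 g &
    forall phi : R -> R, test_fun phi ->
      Rintegral lebesgue_measure I01 (fun x => m x * @derive1 R R^o phi x)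
      = - Rintegral lebesgue_measure I01 (fun x => g x * phi x)].

(* Main.v *)
Require Import Defs.
From HB Require Import structures.
From mathcomp Require Import all_boot all_order all_algebra.
From mathcomp Require Import all_classical all_reals all_analysis.
From mathcomp Require Import ring lra.
Import Order.TTheory GRing.Theory Num.Theory.
Import numFieldNormedType.Exports.
Local Open Scope classical_set_scope.
Local Open Scope ring_scope.

Section aux.
Context {R : realType}.
Notation mu := (@lebesgue_measure R).

Lemma is_derive_cont (F : R -> R) (x df : R) : is_derive x (1:R) F df -> {for x, continuous F}.
Proof.
move=> H; apply: differentiable_continuous; apply/derivable1_diffP.
exact: ex_derive.
Qed.

Lemma deriv_powinv {a x : R} n : 0 < x + a ->
  is_derive x 1 (fun y => ((y + a) ^+ n.+1)^-1)
    (- (n.+1)%:R * ((x + a) ^+ n.+2)^-1).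
Proof.
move=> xa.
have h1 := @is_deriveX R R (shift a) n.+1 x 1 1 (is_derive_shift x 1 a).
rewrite exprfctE in h1.
have hne : (x + a) ^+ n.+1 != 0 by rewrite expf_neq0 // gt_eqF.
have := @is_deriveV R (fun y => shift a y ^+ n.+1) x _ 1 hne h1.
move=> H; apply: (is_derive_eq H) => /=.
have t0 : (x + a) != 0 by rewrite gt_eqF.
have u0 : (x + a) ^+ n != 0 by rewrite expf_neq0.
rewrite /GRing.scale /= mulr1.
set t := x + a; set u := t ^+ n.
rewrite !exprS -/u.
field; rewrite ?u0 ?t0 //.
Qed.

Definition c01 (f : R -> R) := forall x : R, 0 <= x <= 1 -> {for x, continuous f}.

Lemma c01_within f : c01 f -> {within `[0, 1], continuous f}.
Proof.
move=> cf; apply: continuous_in_subspaceT => x.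
rewrite inE /= in_itv /= => hx; exact: cf.
Qed.

Lemma c01_int f : c01 f -> mu.-integrable `[0, 1] (EFin \o f).
Proof.
move=> cf; apply: continuous_compact_integrable; first exact: segment_compact.
exact: c01_within.
Qed.

Lemma c01_intI f : c01 f -> mu.-integrable I01 (EFin \o f).
Proof.
move=> cf; apply: (integrableS _ _ _ (c01_int _ cf)) => //.
  exact: measurable_itv.
by move=> x; rewrite /I01 /= !in_itv /= => /andP[h0 h1]; rewrite !ltW.
Qed.

Lemma ftc01 (F f : R -> R) : (forall x : R, 0 <= x <= 1 -> is_derive x 1 F (f x)) ->
  c01 f ->
  (\int[mu]_(x in `[0%R, 1%R]) (f x)%:E = (F 1 - F 0)%:E)%E.
Proof.
move=> dF cf; rewrite EFinB; apply: continuous_FTC2 => //.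
- exact: c01_within.
- split.
  + move=> x; rewrite in_itv /= => /andP[h0 h1].
    by apply: (@ex_derive _ _ _ _ _ _ (f x)); apply: dF; rewrite ltW // ltW.
  + apply: cvg_at_right_filter; apply: (@is_derive_cont _ _ (f 0)); apply: dF.
    by rewrite lexx ler01.
  + apply: cvg_at_left_filter; apply: (@is_derive_cont _ _ (f 1)); apply: dF.
    by rewrite lexx ler01.
- move=> x; rewrite in_itv /= => /andP[h0 h1].
  have := dF x; rewrite ltW // ltW // => /(_ isT) H.
  by rewrite derive1E derive_val.
Qed.

Lemma c01M f g : c01 f -> c01 g -> c01 (fun x => f x * g x).
Proof. by move=> cf cg x hx; apply: continuousM; [apply: cf|apply: cg]. Qed.

Lemma c01_L2 f : c01 f -> L2_01 f.
Proof.
move=> cf; split.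
  by apply/measurable_realfun.measurable_EFinP; have /integrableP[] := c01_intI _ cf.
have cf2 : c01 (fun x => f x ^+ 2).
  have -> : (fun x => f x ^+ 2) = (fun x => f x * f x).
    by apply/funext => y; rewrite expr2.
  exact: c01M.
have /integrableP[_] := c01_intI _ cf2.
apply: le_lt_trans; rewrite le_eqVlt; apply/orP; left; apply/eqP.
apply: eq_integral => x _ /=; rewrite ger0_norm //; exact: sqr_ge0.
Qed.

Lemma c01_intS f (D : set R) : c01 f -> measurable D -> D `<=` `[0%R, 1%R] ->
  mu.-integrable D (EFin \o f).
Proof. by move=> cf mD sD; apply: (integrableS _ _ _ (c01_int _ cf)). Qed.

Lemma deriv_cont (F : R -> R) (x : R) : derivable F x 1 -> {for x, continuous F}.
Proof. by move=> H; apply: differentiable_continuous; apply/derivable1_diffP. Qed.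

Definition mm (a b : R) (x : R) := b - 2 * ln (x + a).
Definition mmx (a : R) (x : R) := - 2 * (x + a)^-1.

Lemma mm_deriv (a b x : R) : 0 < x + a -> is_derive x 1 (mm a b) (mmx a x).
Proof.
move=> xa.
have h1 : is_derive x 1 (@ln R \o shift a) ((x + a)^-1 * 1) :=
  @is_derive1_comp R (@ln R) (shift a) x _ _ (is_derive1_ln xa) (is_derive_shift x 1 a).
have h2 := is_deriveB (is_derive_cst b x 1) (is_deriveZ 2 h1).
apply: (is_derive_eq h2).
by rewrite /mmx /GRing.scale /= mulr1 sub0r mulNr.
Qed.

Lemma mmx_deriv (a x : R) : 0 < x + a -> is_derive x 1 (mmx a) (2 * ((x + a) ^+ 2)^-1).
Proof.
move=> xa.
have h := is_deriveZ (-2) (deriv_powinv 0 xa).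
have -> : mmx a = (-2) \*: (fun y => ((y + a) ^+ 1)^-1).
  by apply/funext => y; rewrite /mmx /= expr1.
apply: (is_derive_eq h).
by rewrite /GRing.scale /= mulrA mulrNN mulr1.
Qed.

Lemma c01_mm (a b : R) : 0 < a -> c01 (mm a b).
Proof.
move=> a0 x /andP[x0 _]; apply: (@is_derive_cont _ _ (mmx a x)).
by apply: mm_deriv; apply: ltr_wpDl.
Qed.

Lemma c01_mmx (a : R) : 0 < a -> c01 (mmx a).
Proof.
move=> a0 x /andP[x0 _]; apply: (@is_derive_cont _ _ (2 * ((x + a) ^+ 2)^-1)).
by apply: mmx_deriv; apply: ltr_wpDl.
Qed.

Lemma I01_cc (f : R -> R) : c01 f ->
  Rintegral mu I01 f = Rintegral mu `[0%R, 1%R] f.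
Proof.
move=> cf; rewrite /I01.
rewrite (@Rintegral_itv_bndo_bndc _ (BRight 0) 1 f); last first.
  apply: c01_intS => //.
  by move=> x; rewrite /= !in_itv /= => /andP[h0 h1]; rewrite !ltW.
rewrite (@Rintegral_itv_obnd_cbnd _ 0 (BRight 1) f) //.
apply: c01_intS => //.
by move=> x; rewrite /= !in_itv /= => /andP[h0 h1]; rewrite h1 ltW.
Qed.

Lemma weak_mm (a b : R) (phi : R -> R) : 0 < a -> test_fun phi ->
  Rintegral mu I01 (fun x => mm a b x * @derive1 R R^o phi x)
  = - Rintegral mu I01 (fun x => mmx a x * phi x).
Proof.
move=> a0 [dphi [p [q [p0 pq q1 phi0]]]].
have d0 : forall x, derivable phi x 1 := dphi 0%N.
have d1 : forall x, derivable (@derive1 R R^o phi) x 1 := dphi 1%N.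
have phi00 : phi 0 = 0 by apply: phi0; left.
have phi10 : phi 1 = 0 by apply: phi0; right; exact: q1.
have cphi : c01 phi by move=> x _; apply: deriv_cont.
have cphi' : c01 (@derive1 R R^o phi) by move=> x _; apply: deriv_cont.
rewrite I01_cc; last exact: c01M (c01_mm _ _ a0) cphi'.
rewrite I01_cc; last exact: c01M (c01_mmx _ a0) cphi.
rewrite (@Rintegration_by_parts R (mm a b) phi (mmx a) (@derive1 R R^o phi) 0 1) //.
- by rewrite phi00 phi10 !mulr0 subrr sub0r.
- exact: c01_within (c01_mmx _ a0).
- split.
  + move=> x; rewrite in_itv /= => /andP[h0 h1].
    by apply: (@ex_derive _ _ _ _ _ _ (mmx a x)); apply: mm_deriv; apply: ltr_wpDl; rewrite ?ltW.
  + by apply: cvg_at_right_filter; apply: c01_mm => //; rewrite lexx ler01.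
  + by apply: cvg_at_left_filter; apply: c01_mm => //; rewrite lexx ler01.
- move=> x; rewrite in_itv /= => /andP[h0 h1].
  have := @mm_deriv a b x; rewrite ltr_wpDl ?ltW // => /(_ isT) H.
  by rewrite derive1E derive_val.
- exact: c01_within cphi'.
- split.
  + by move=> x _; exact: d0.
  + by apply: cvg_at_right_filter; apply: cphi; rewrite lexx ler01.
  + by apply: cvg_at_left_filter; apply: cphi; rewrite lexx ler01.
Qed.

Lemma W12_mm (a b : R) : 0 < a -> W12_weak_deriv (mm a b) (mmx a).
Proof.
move=> a0; split.
- exact: c01_L2 (c01_mm _ _ a0).
- exact: c01_L2 (c01_mmx _ a0).
- by move=> phi tphi; apply: weak_mm.
Qed.
Lemma I01_ccE (f : R -> R) : c01 f ->
  (\int[mu]_(x in I01) (f x)%:E = \int[mu]_(x in `[0%R, 1%R]) (f x)%:E)%E.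
Proof.
move=> cf; rewrite /I01.
rewrite (@integral_itv_bndo_bndc _ (BRight 0) 1 (EFin \o f)); last first.
  have sub : (`]0%R, 1%R[ : set R) `<=` `[0%R, 1%R].
    by move=> x; rewrite /= !in_itv /= => /andP[h0 h1]; rewrite !ltW.
  by have /integrableP[] := @c01_intS f _ cf (measurable_itv _) sub.
rewrite (@integral_itv_obnd_cbnd _ 0 (BRight 1) (EFin \o f)) //.
have sub : (`]0%R, 1%R] : set R) `<=` `[0%R, 1%R].
  by move=> x; rewrite /= !in_itv /= => /andP[h0 h1]; rewrite h1 ltW.
by have /integrableP[] := @c01_intS f _ cf (measurable_itv _) sub.
Qed.

Lemma int_pow (a r : R) n : 0 < a ->
  (\int[mu]_(x in I01) (r * ((x + a) ^+ n.+2)^-1)%:E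
   = ((r / (n.+1)%:R) * ((a ^+ n.+1)^-1 - ((1 + a) ^+ n.+1)^-1))%:E)%E.
Proof.
move=> a0.
have cf : c01 (fun x => r * ((x + a) ^+ n.+2)^-1).
  move=> x /andP[x0 _]; apply: continuousM; first exact: cst_continuous.
  apply: (@is_derive_cont _ _ (- (n.+2)%:R * ((x + a) ^+ n.+3)^-1)).
  by apply: deriv_powinv; apply: ltr_wpDl.
rewrite I01_ccE //.
have Hd : forall x : R, 0 <= x <= 1 ->
  is_derive x 1 (fun x => - (r / (n.+1)%:R) * ((x + a) ^+ n.+1)^-1)
    (r * ((x + a) ^+ n.+2)^-1).
  move=> x /andP[x0 _].
  have := is_deriveZ (- (r / (n.+1)%:R)) (@deriv_powinv a x n (ltr_wpDl x0 a0)).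
  move=> H; apply: (is_derive_eq H).
  have xa : 0 < x + a := ltr_wpDl x0 a0.
  have hn : 0 <= n%:R :> R := ler0n R n.
  rewrite /GRing.scale /=; field.
  by rewrite expf_neq0 ?gt_eqF //= gt_eqF //; lra.
rewrite (ftc01 _ _ Hd cf).
congr EFin; rewrite add0r addrC; field.
have hn : 0 <= n%:R :> R := ler0n R n.
have a1 : 0 < 1 + a by lra.
by rewrite !expf_neq0 ?gt_eqF //= gt_eqF //; lra.
Qed.
End aux.

Theorem lemma4 (R : realType) (M : R) (hM : 0 < M) :
  exists delta0 : R, 0 < delta0 /\
  forall delta : R, 0 < delta -> delta < delta0 ->
  forall h : R -> R, {within `[0, +oo[%classic, continuous h} ->
  ~ (forall m mx : R -> R,
       W12_weak_deriv m mx ->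
       (\int[lebesgue_measure]_(x in I01) (expR (m x))%:E = M%:E)%E ->
       (\int[lebesgue_measure]_(x in I01) (expR (2 * m x))%:E
        < (delta * M ^+ 2)%:E
            * \int[lebesgue_measure]_(x in I01) ((mx x) ^+ 2)%:E
          + (h (fine (\int[lebesgue_measure]_(x in I01) (expR (m x))%:E)))%:E)%E).
Proof.
exists (1/24); split; first lra.
move=> delta d0 d1 h _ H.
set C := h M.
set L := `|C| / M ^+ 2.
have M2 : 0 < M ^+ 2 by rewrite exprn_gt0.
have L0 : 0 <= L by rewrite divr_ge0 // ltW.
set a := (6 * (L + 1))^-1.
have a0 : 0 < a by rewrite invr_gt0; lra.
have ha : 6 * a * (L + 1) = 1.
  rewrite /a -mulrA; field; lra.
set c := M * a * (1 + a).
have c0 : 0 < c by rewrite /c !mulr_gt0 //; lra.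
set b := ln c.
have eexp : forall x : R, 0 < x -> expR (mm a b x) = c * ((x + a) ^+ 2)^-1.
  move=> x x0; rewrite /mm /b expRB expRM_natl lnK ?posrE // lnK // posrE.
  by apply: ltr_wpDl; rewrite ?ltW.
have I1 : (\int[lebesgue_measure]_(x in I01) (expR (mm a b x))%:E = M%:E)%E.
  transitivity (\int[lebesgue_measure]_(x in I01) (c * ((x + a) ^+ 0.+2)^-1)%:E)%E.
    apply: eq_integral => x; rewrite /I01 inE /= in_itv /= => /andP[x0 _].
    by rewrite eexp.
  rewrite int_pow //; congr EFin; rewrite /c; field.
  by rewrite !gt_eqF //; lra.
have I2 : (\int[lebesgue_measure]_(x in I01) (expR (2 * mm a b x))%:E =
   ((c ^+ 2 / (2.+1)%:R) * ((a ^+ 3)^-1 - ((1 + a) ^+ 3)^-1))%:E)%E.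
  rewrite -int_pow //.
  apply: eq_integral => x; rewrite /I01 inE /= in_itv /= => /andP[x0 _].
  rewrite expRM_natl eexp //; congr EFin.
  have xa : 0 < x + a by apply: ltr_wpDl; rewrite ?ltW.
  by field; rewrite gt_eqF.
have I3 : (\int[lebesgue_measure]_(x in I01) (mmx a x ^+ 2)%:E =
   ((4 / (0.+1)%:R) * ((a ^+ 1)^-1 - ((1 + a) ^+ 1)^-1))%:E)%E.
  rewrite -int_pow //.
  apply: eq_integral => x; rewrite /I01 inE /= in_itv /= => /andP[x0 _].
  rewrite /mmx; congr EFin.
  have xa : 0 < x + a by apply: ltr_wpDl; rewrite ?ltW.
  by field; rewrite gt_eqF.
have := H (mm a b) (mmx a) (W12_mm a b a0) I1.
rewrite I1 I2 I3 /= -/C -EFinM -EFinD lte_fin.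
apply/negP; rewrite -leNgt.
set p := a * (1 + a).
have p0 : 0 < p by rewrite /p mulr_gt0 //; lra.
have a1 : 0 < 1 + a by lra.
have e1 : c ^+ 2 / 3 * ((a ^+ 3)^-1 - ((1 + a) ^+ 3)^-1)
   = (M ^+ 2 * (1 + 3 * a + 3 * a ^+ 2) / 3) / p.
  by rewrite /c /p; field; rewrite !gt_eqF.
have e2 : delta * M ^+ 2 * (4 / 1 * ((a ^+ 1)^-1 - ((1 + a) ^+ 1)^-1)) + C
   = (4 * delta * M ^+ 2 + C * p) / p.
  by rewrite /p; field; rewrite !gt_eqF.
rewrite e1 e2 ler_pM2r ?invr_gt0 //.
have hLC : `|C| = L * M ^+ 2 by rewrite /L; field; rewrite gt_eqF.
have hCp : C * p <= `|C| * p by rewrite ler_pM2r // ler_norm.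
have hLa : L * a = (1 - 6 * a) / 6 by lra.
have hX : `|C| * p = (L * a) * M ^+ 2 * (1 + a) by rewrite hLC /p; ring.
rewrite hLa in hX.
have hd : 4 * delta * M ^+ 2 <= M ^+ 2 / 6 by nra.
have ha2 : 0 <= M ^+ 2 * a by rewrite mulr_ge0 // ltW.
have ha3 : 0 <= M ^+ 2 * a ^+ 2 by apply: mulr_ge0; apply: ltW; rewrite ?exprn_gt0.
have : (1 - 6 * a) / 6 * M ^+ 2 * (1 + a) = M ^+ 2 / 6 - (5 / 6) * (M ^+ 2 * a) - M ^+ 2 * a ^+ 2.
  by field.
have : M ^+ 2 * (1 + 3 * a + 3 * a ^+ 2) / 3 = M ^+ 2 / 3 + M ^+ 2 * a + M ^+ 2 * a ^+ 2.
  by field.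
lra.
Qed.
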